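(* For a (nondegenerate) triangle $AB\Gamma$, let $\ell_1$ be the line perpendicular to $AB$ through $B$, $\ell_2$ the line perpendicular to $B\Gamma$ through $\Gamma$, and $\ell_3$ the line perpendicular to $\Gamma A$ through $A$, and let $A'B'\Gamma'$ be the triangle bounded by these three lines. Let $E$ and $E'$ be the areas of $AB\Gamma$ and $A'B'\Gamma'$. Then, over all triangles $AB\Gamma$, the ratio $E'/E$ has minimum value $3$, and $E'/E = 3$ holds if and only if $AB\Gamma$ is equilateral (in which case $A'B'\Gamma'$ is also equilateral). *)

(* Defs.v *)
From Stdlib Require Import Reals.
Open Scope R_scope.

Definition point : Type := (R * R)%type.

Definition dist2 (P Q : point) : R :=
  (fst P - fst Q) ^ 2 + (snd P - snd Q) ^ 2.

(* twice the signed area of triangle PQR *)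
Definition cross (P Q S : point) : R :=
  (fst Q - fst P) * (snd S - snd P) - (snd Q - snd P) * (fst S - fst P).

Definition area (P Q S : point) : R := Rabs (cross P Q S) / 2.

Definition nondegenerate (P Q S : point) : Prop := cross P Q S <> 0.

Definition equilateral (P Q S : point) : Prop :=
  dist2 P Q = dist2 Q S /\ dist2 Q S = dist2 S P.

Definition on_perp (X Y U V : point) : Prop :=
  (fst X - fst Y) * (fst V - fst U) + (snd X - snd Y) * (snd V - snd U) = 0.

Definition on_l1 (A B C X : point) : Prop := on_perp X B A B.
Definition on_l2 (A B C X : point) : Prop := on_perp X C B C.
Definition on_l3 (A B C X : point) : Prop := on_perp X A C A.

Definition bounded_triangle (A B C A' B' C' : point) : Prop :=
  (on_l3 A B C A' /\ on_l1 A B C A') /\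
  (on_l1 A B C B' /\ on_l2 A B C B') /\
  (on_l2 A B C C' /\ on_l3 A B C C').

(* Main.v *)
Require Import Defs.
From Stdlib Require Import Reals Lra Psatz.
Open Scope R_scope.

Lemma solve2 x y p1 p2 u1 u2 q1 q2 v1 v2 :
  u1*v2 - u2*v1 <> 0 ->
  (x-p1)*u1+(y-p2)*u2=0 -> (x-q1)*v1+(y-q2)*v2=0 ->
  x = ((p1*u1+p2*u2)*v2 - (q1*v1+q2*v2)*u2)/(u1*v2-u2*v1) /\
  y = (u1*(q1*v1+q2*v2) - v1*(p1*u1+p2*u2))/(u1*v2-u2*v1).
Proof.
  intros Hd H1 H2. split.
  - assert (E: x*(u1*v2-u2*v1) = (p1*u1+p2*u2)*v2 - (q1*v1+q2*v2)*u2).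
    { transitivity (x*(u1*v2-u2*v1) - (v2*((x-p1)*u1+(y-p2)*u2) - u2*((x-q1)*v1+(y-q2)*v2))).
      rewrite H1, H2; ring. ring. }
    rewrite <- E; field; auto.
  - assert (E: y*(u1*v2-u2*v1) = u1*(q1*v1+q2*v2) - v1*(p1*u1+p2*u2)).
    { transitivity (y*(u1*v2-u2*v1) - (u1*((x-q1)*v1+(y-q2)*v2) - v1*((x-p1)*u1+(y-p2)*u2))).
      rewrite H1, H2; ring. ring. }
    rewrite <- E; field; auto.
Qed.

Lemma key a1 a2 b1 b2 c1 c2 x1 x2 y1 y2 z1 z2 :
  let D := (b1-a1)*(c2-a2)-(b2-a2)*(c1-a1) in
  D <> 0 ->
  x1 = ((a1*(a1-c1)+a2*(a2-c2))*(b2-a2) - (b1*(b1-a1)+b2*(b2-a2))*(a2-c2))/((a1-c1)*(b2-a2)-(a2-c2)*(b1-a1)) ->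
  x2 = ((a1-c1)*(b1*(b1-a1)+b2*(b2-a2)) - (b1-a1)*(a1*(a1-c1)+a2*(a2-c2)))/((a1-c1)*(b2-a2)-(a2-c2)*(b1-a1)) ->
  y1 = ((b1*(b1-a1)+b2*(b2-a2))*(c2-b2) - (c1*(c1-b1)+c2*(c2-b2))*(b2-a2))/((b1-a1)*(c2-b2)-(b2-a2)*(c1-b1)) ->
  y2 = ((b1-a1)*(c1*(c1-b1)+c2*(c2-b2)) - (c1-b1)*(b1*(b1-a1)+b2*(b2-a2)))/((b1-a1)*(c2-b2)-(b2-a2)*(c1-b1)) ->
  z1 = ((c1*(c1-b1)+c2*(c2-b2))*(a2-c2) - (a1*(a1-c1)+a2*(a2-c2))*(c2-b2))/((c1-b1)*(a2-c2)-(c2-b2)*(a1-c1)) ->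
  z2 = ((c1-b1)*(a1*(a1-c1)+a2*(a2-c2)) - (a1-c1)*(c1*(c1-b1)+c2*(c2-b2)))/((c1-b1)*(a2-c2)-(c2-b2)*(a1-c1)) ->
  let S := ((a1-b1)^2+(a2-b2)^2) + ((b1-c1)^2+(b2-c2)^2) + ((c1-a1)^2+(c2-a2)^2) in
  (y1-x1)*(z2-x2)-(y2-x2)*(z1-x1) = S^2/(4*D) /\
  ((x1-y1)^2+(x2-y2)^2)*(4*D^2) = S^2 * ((a1-b1)^2+(a2-b2)^2) /\
  ((y1-z1)^2+(y2-z2)^2)*(4*D^2) = S^2 * ((b1-c1)^2+(b2-c2)^2) /\
  ((z1-x1)^2+(z2-x2)^2)*(4*D^2) = S^2 * ((c1-a1)^2+(c2-a2)^2).
Proof.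
  intros D HD -> -> -> -> -> -> S.
  replace ((a1-c1)*(b2-a2)-(a2-c2)*(b1-a1)) with D by (unfold D; ring).
  replace ((b1-a1)*(c2-b2)-(b2-a2)*(c1-b1)) with D by (unfold D; ring).
  replace ((c1-b1)*(a2-c2)-(c2-b2)*(a1-c1)) with D by (unfold D; ring).
  unfold S, D in *; repeat split; field; auto.
Qed.

Lemma all_facts (A B C A' B' C' : point) :
  nondegenerate A B C -> bounded_triangle A B C A' B' C' ->
  let D := cross A B C in
  let S := dist2 A B + dist2 B C + dist2 C A in
  cross A' B' C' = S^2/(4*D) /\
  dist2 A' B' * (4*D^2) = S^2 * dist2 A B /\
  dist2 B' C' * (4*D^2) = S^2 * dist2 B C /\
  dist2 C' A' * (4*D^2) = S^2 * dist2 C A.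
Proof.
  destruct A as [a1 a2], B as [b1 b2], C as [c1 c2],
    A' as [x1 x2], B' as [y1 y2], C' as [z1 z2].
  unfold nondegenerate, bounded_triangle, on_l1, on_l2, on_l3, on_perp,
    cross, dist2; simpl.
  intros HD [[H1 H2] [[H3 H4] [H5 H6]]].
  destruct (solve2 x1 x2 a1 a2 (a1-c1) (a2-c2) b1 b2 (b1-a1) (b2-a2)) as [E1 E2];
    [intro E; apply HD; nra | exact H1 | exact H2 |].
  destruct (solve2 y1 y2 b1 b2 (b1-a1) (b2-a2) c1 c2 (c1-b1) (c2-b2)) as [E3 E4];
    [intro E; apply HD; nra | exact H3 | exact H4 |].
  destruct (solve2 z1 z2 c1 c2 (c1-b1) (c2-b2) a1 a2 (a1-c1) (a2-c2)) as [E5 E6];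
    [intro E; apply HD; nra | exact H5 | exact H6 |].
  pose proof (key a1 a2 b1 b2 c1 c2 x1 x2 y1 y2 z1 z2 HD E1 E2 E3 E4 E5 E6) as K.
  simpl in K. exact K.
Qed.

Lemma ratio_eq (A B C A' B' C' : point) :
  nondegenerate A B C -> bounded_triangle A B C A' B' C' ->
  area A' B' C' / area A B C =
  (dist2 A B + dist2 B C + dist2 C A)^2 / (4 * (cross A B C)^2).
Proof.
  intros HD HB. destruct (all_facts _ _ _ _ _ _ HD HB) as [K _].
  unfold area. rewrite K. unfold nondegenerate in HD.
  set (D := cross A B C) in *. set (S := dist2 A B + dist2 B C + dist2 C A).
  assert (HS : 0 <= S^2) by nra.
  destruct (Rcase_abs D) as [Hn|Hp].
  - rewrite (Rabs_left D Hn).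
    rewrite Rabs_left1.
    + field; auto.
    + unfold Rdiv. assert (/(4*D) < 0) by (apply Rinv_lt_0_compat; lra). nra.
  - assert (Hp' : D > 0) by lra.
    rewrite (Rabs_right D Hp).
    rewrite Rabs_right.
    + field; auto.
    + apply Rle_ge. unfold Rdiv. apply Rmult_le_pos; auto.
      left; apply Rinv_0_lt_compat; lra.
Qed.

Lemma sq0 x : x^2 = 0 -> x = 0.
Proof. intro H. assert (x*x = 0) by (rewrite <- H; ring).
  destruct (Rmult_integral _ _ H0); auto. Qed.

Lemma heron (A B C : point) :
  (dist2 A B + dist2 B C + dist2 C A)^2 - 12 * (cross A B C)^2 =
  2 * ((dist2 A B - dist2 B C)^2 + (dist2 B C - dist2 C A)^2 + (dist2 C A - dist2 A B)^2).
Proof.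
  destruct A, B, C; unfold dist2, cross; simpl; ring.
Qed.

Theorem mainTheorem2 :
  (forall A B C A' B' C' : point,
     nondegenerate A B C ->
     bounded_triangle A B C A' B' C' ->
     3 <= area A' B' C' / area A B C /\
     (area A' B' C' / area A B C = 3 <-> equilateral A B C) /\
     (equilateral A B C -> equilateral A' B' C'))
  /\
  (exists A B C A' B' C' : point,
     nondegenerate A B C /\ bounded_triangle A B C A' B' C' /\
     area A' B' C' / area A B C = 3).
Proof.
  assert (P1 : forall A B C A' B' C' : point,
     nondegenerate A B C ->
     bounded_triangle A B C A' B' C' ->
     3 <= area A' B' C' / area A B C /\
     (area A' B' C' / area A B C = 3 <-> equilateral A B C) /\
     (equilateral A B C -> equilateral A' B' C')).
  { intros A B C A' B' C' HD HB.
    rewrite (ratio_eq _ _ _ _ _ _ HD HB).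
    destruct (all_facts _ _ _ _ _ _ HD HB) as [_ [F1 [F2 F3]]].
    pose proof (heron A B C) as H.
    unfold nondegenerate in HD.
    set (D := cross A B C) in *.
    set (p := dist2 A B) in *. set (q := dist2 B C) in *. set (r := dist2 C A) in *.
    set (S := p + q + r) in *.
    assert (HD2 : 0 < D^2) by (simpl; rewrite Rmult_1_r; apply Rsqr_pos_lt; auto).
    assert (E3 : S^2 / (4 * D^2) - 3 = ((p - q)^2 + (q - r)^2 + (r - p)^2) / (2 * D^2)).
    { transitivity ((S^2 - 12 * D^2)/(4*D^2)); [field; lra | rewrite H; field; lra]. }
    split; [|split].
    - assert (0 <= ((p - q)^2 + (q - r)^2 + (r - p)^2) / (2 * D^2)).
      { unfold Rdiv; apply Rmult_le_pos; [repeat apply Rplus_le_le_0_compat; apply pow2_ge_0|]. left; apply Rinv_0_lt_compat; lra. }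
      lra.
    - split.
      + intro Heq. assert (Z : ((p - q)^2 + (q - r)^2 + (r - p)^2) / (2 * D^2) = 0) by lra.
        assert (Z' : (p - q)^2 + (q - r)^2 + (r - p)^2 = 0).
        { apply (Rmult_eq_reg_r (/ (2 * D^2))).
          - unfold Rdiv in Z; lra.
          - apply Rgt_not_eq, Rinv_0_lt_compat; lra. }
        pose proof (pow2_ge_0 (p-q)); pose proof (pow2_ge_0 (q-r)); pose proof (pow2_ge_0 (r-p)).
        assert (Q1 : (p-q)^2 = 0) by lra. assert (Q2 : (q-r)^2 = 0) by lra.
        apply sq0 in Q1. apply sq0 in Q2.
        unfold equilateral; fold p q r. split; lra.
      + unfold equilateral; fold p q r. intros [Ha Hb].
        assert (Z : ((p - q)^2 + (q - r)^2 + (r - p)^2) / (2 * D^2) = 0).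
        { rewrite Ha, Hb. unfold Rdiv. ring. }
        lra.
    - unfold equilateral; fold p q r. intros [Ha Hb].
      assert (G : 4 * D^2 <> 0) by lra.
      split.
      + apply (Rmult_eq_reg_r (4*D^2)); auto. rewrite F1, F2, Ha; reflexivity.
      + apply (Rmult_eq_reg_r (4*D^2)); auto. rewrite F2, F3, Hb; reflexivity. }
  split; [exact P1|].
  set (s := sqrt 3).
  assert (Hs : s * s = 3) by (apply sqrt_sqrt; lra).
  assert (Hs0 : 0 < s) by (apply sqrt_lt_R0; lra).
  set (a1 := 0). set (a2 := 0). set (b1 := 2). set (b2 := 0). set (c1 := 1). set (c2 := s).
  assert (HD : (b1-a1)*(c2-a2)-(b2-a2)*(c1-a1) <> 0) by (unfold a1,a2,b1,b2,c1,c2; nra).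
  exists (a1,a2), (b1,b2), (c1,c2),
    (((a1*(a1-c1)+a2*(a2-c2))*(b2-a2) - (b1*(b1-a1)+b2*(b2-a2))*(a2-c2))/((a1-c1)*(b2-a2)-(a2-c2)*(b1-a1)),
     ((a1-c1)*(b1*(b1-a1)+b2*(b2-a2)) - (b1-a1)*(a1*(a1-c1)+a2*(a2-c2)))/((a1-c1)*(b2-a2)-(a2-c2)*(b1-a1))),
    (((b1*(b1-a1)+b2*(b2-a2))*(c2-b2) - (c1*(c1-b1)+c2*(c2-b2))*(b2-a2))/((b1-a1)*(c2-b2)-(b2-a2)*(c1-b1)),
     ((b1-a1)*(c1*(c1-b1)+c2*(c2-b2)) - (c1-b1)*(b1*(b1-a1)+b2*(b2-a2)))/((b1-a1)*(c2-b2)-(b2-a2)*(c1-b1))),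
    (((c1*(c1-b1)+c2*(c2-b2))*(a2-c2) - (a1*(a1-c1)+a2*(a2-c2))*(c2-b2))/((c1-b1)*(a2-c2)-(c2-b2)*(a1-c1)),
     ((c1-b1)*(a1*(a1-c1)+a2*(a2-c2)) - (a1-c1)*(c1*(c1-b1)+c2*(c2-b2)))/((c1-b1)*(a2-c2)-(c2-b2)*(a1-c1))).
  assert (ND : nondegenerate (a1,a2) (b1,b2) (c1,c2)) by (unfold nondegenerate, cross; simpl; exact HD).
  assert (BT : bounded_triangle (a1,a2) (b1,b2) (c1,c2)
    (((a1*(a1-c1)+a2*(a2-c2))*(b2-a2) - (b1*(b1-a1)+b2*(b2-a2))*(a2-c2))/((a1-c1)*(b2-a2)-(a2-c2)*(b1-a1)),
     ((a1-c1)*(b1*(b1-a1)+b2*(b2-a2)) - (b1-a1)*(a1*(a1-c1)+a2*(a2-c2)))/((a1-c1)*(b2-a2)-(a2-c2)*(b1-a1)))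
    (((b1*(b1-a1)+b2*(b2-a2))*(c2-b2) - (c1*(c1-b1)+c2*(c2-b2))*(b2-a2))/((b1-a1)*(c2-b2)-(b2-a2)*(c1-b1)),
     ((b1-a1)*(c1*(c1-b1)+c2*(c2-b2)) - (c1-b1)*(b1*(b1-a1)+b2*(b2-a2)))/((b1-a1)*(c2-b2)-(b2-a2)*(c1-b1)))
    (((c1*(c1-b1)+c2*(c2-b2))*(a2-c2) - (a1*(a1-c1)+a2*(a2-c2))*(c2-b2))/((c1-b1)*(a2-c2)-(c2-b2)*(a1-c1)),
     ((c1-b1)*(a1*(a1-c1)+a2*(a2-c2)) - (a1-c1)*(c1*(c1-b1)+c2*(c2-b2)))/((c1-b1)*(a2-c2)-(c2-b2)*(a1-c1)))).
  { assert (D1 : (a1-c1)*(b2-a2)-(a2-c2)*(b1-a1) <> 0) by (intro; apply HD; nra).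
    assert (D2 : (b1-a1)*(c2-b2)-(b2-a2)*(c1-b1) <> 0) by (intro; apply HD; nra).
    assert (D3 : (c1-b1)*(a2-c2)-(c2-b2)*(a1-c1) <> 0) by (intro; apply HD; nra).
    unfold bounded_triangle, on_l1, on_l2, on_l3, on_perp; simpl.
    repeat split; field; auto. }
  split; [exact ND|]. split; [exact BT|].
  apply (proj1 (proj2 (P1 _ _ _ _ _ _ ND BT))).
  unfold equilateral, dist2; simpl. unfold a1,a2,b1,b2,c1,c2. split; nra.
Qed.
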